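(* Assume there are finitely many ap-basic classes in $M_1$, namely $K_1,\dots,K_v$, all closed. (a) For every sufficiently small $\theta>0$ there is $\delta(\theta)\in(0,\theta)$ with the following property. Suppose there exist indices $i,i'\in\{1,\dots,v\}$ and an ap $\delta(\theta)$-pseudoorbit $(\xi_0,\dots,\xi_n)$ such that $d(\xi_0,K_i)<\delta(\theta)$, $d(\xi_n,K_{i'})<\delta(\theta)$, and $d(\xi_j,K_i)>\theta$ for some $j\in\{1,\dots,n\}$. Then $i\ne i'$ and $K_i<_{ap}K_{i'}$. (b) For every $\delta'>0$ there exist $\delta\in(0,\delta')$ and $n_0\ge1$ such that every ap $\delta$-pseudoorbit of length greater than $n_0$ passes through $N^{\delta'}(\mathcal{R}_{ap})$.
   Context: Let $M\subset\mathbb{R}^d$ be closed. Let $F:M\to M$ be continuous with $\sup_{x\in M}\|F(x)\|<\infty$. Let $d(x,y)=\max_i|x_i-y_i|$, $d(x,A)=\inf_{y\in A}d(x,y)$, and $N^\delta(A)=\{x\in M:\inf_{y\in A}\|x-y\|<\delta\}$. Suppose $M=M_0\cup M_1$ (disjoint) with $M_0$ closed, $F(M_0)\subseteq M_0$ and $F(M_1)\subseteq M_1$. ap-chain recurrence. For $\delta>0$, an ap $\delta$-pseudoorbit joining $x$ to $y$ is a tuple $(\xi_0,\dots,\xi_n)\in M^{n+1}$, $n\ge1$, with: - $\xi_0=x$ and $\xi_n=y$; - $\xi_i\in M_0\Rightarrow\xi_{i+1}\in M_0$; - $d(\xi_{i+1},F(\xi_i))<\delta$ for all $i$. Its length is $n$.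 Write $x<_{ap}y$ if for every $\delta>0$ such a pseudoorbit exists, and $x\sim_{ap}y$ if both directions hold. Let $\mathcal{R}_{ap}=\{x:x\sim_{ap}x\}$. The ap-basic classes are the equivalence classes of $\sim_{ap}$ on $\mathcal{R}_{ap}$. For classes, $K<_{ap}K'$ means $x<_{ap}y$ for $x\in K$, $y\in K'$. *)

(* Defs.v *)
From Stdlib Require Import Reals.
From mathcomp Require Import ssreflect ssrbool ssrfun eqtype ssrnat seq fintype.
Open Scope R_scope.

Notation pt d := ('I_d -> R).

Definition sdist {d} (x y : pt d) : R :=
  foldr Rmax 0 (map (fun i => Rabs (x i - y i)) (enum 'I_d)).

Definition edist {d} (x y : pt d) : R :=
  sqrt (foldr Rplus 0 (map (fun i => (x i - y i) ^ 2) (enum 'I_d))).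

Definition zero_pt {d} : pt d := fun _ => 0.

Definition dist_set_lt {d} (x : pt d) (A : pt d -> Prop) (r : R) : Prop :=
  exists y, A y /\ sdist x y < r.

(* d(x,A) > r, i.e. inf_{y in A} d(x,y) > r (true for empty A: inf = +oo) *)
Definition dist_set_gt {d} (x : pt d) (A : pt d -> Prop) (r : R) : Prop :=
  exists r', r < r' /\ forall y, A y -> r' <= sdist x y.

Definition ap_nbhd {d} (M : pt d -> Prop) (delta : R) (A : pt d -> Prop) (x : pt d) : Prop :=
  M x /\ exists y, A y /\ edist x y < delta.

Definition closed_in_Rd {d} (A : pt d -> Prop) : Prop :=
  forall x, (forall eps, 0 < eps -> exists y, A y /\ sdist x y < eps) -> A x.

Definition cont_on_set {d} (M : pt d -> Prop) (F : pt d -> pt d) : Prop :=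
  forall x, M x -> forall eps, 0 < eps -> exists eta, 0 < eta /\
    forall y, M y -> sdist x y < eta -> sdist (F x) (F y) < eps.

Definition ap_pseudoorbit {d} (M M0 : pt d -> Prop) (F : pt d -> pt d)
    (delta : R) (xi : nat -> pt d) (n : nat) : Prop :=
  le 1 n /\
  (forall j, le j n -> M (xi j)) /\
  (forall j, lt j n -> (M0 (xi j) -> M0 (xi (S j))) /\
                       sdist (xi (S j)) (F (xi j)) < delta).

Definition ap_le {d} (M M0 : pt d -> Prop) (F : pt d -> pt d) (x y : pt d) : Prop :=
  forall delta, 0 < delta -> exists xi n,
    ap_pseudoorbit M M0 F delta xi n /\ xi O = x /\ xi n = y.

Definition ap_equiv {d} M M0 F (x y : pt d) : Prop :=
  ap_le M M0 F x y /\ ap_le M M0 F y x.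

Definition R_ap {d} M M0 F (x : pt d) : Prop := ap_equiv M M0 F x x.

Definition ap_basic_class {d} M M0 F (K : pt d -> Prop) : Prop :=
  exists x, R_ap M M0 F x /\ forall y, K y <-> (R_ap M M0 F y /\ ap_equiv M M0 F x y).

Definition class_ap_le {d} M M0 F (K K' : pt d -> Prop) : Prop :=
  forall x y, K x -> K' y -> ap_le M M0 F x y.

(* Main.v *)
Require Import Defs.
From Stdlib Require Import Reals Lra Lia ClassicalEpsilon Classical FunctionalExtensionality.
From mathcomp Require ssreflect ssrbool ssrfun eqtype ssrnat seq.
From mathcomp Require Import fintype.
Open Scope R_scope.

Definition incr (phi : nat -> nat) := forall n, (phi n < phi (S n))%nat.

Lemma incr_lt phi : incr phi -> forall n m, (n < m)%nat -> (phi n < phi m)%nat.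
Proof.
  intros H n m Hnm. induction m. lia.
  destruct (Nat.eq_dec n m). subst. apply H. specialize (H m). lia.
Qed.

Lemma incr_ge phi : incr phi -> forall n, (n <= phi n)%nat.
Proof. intros H n. induction n. lia. specialize (H n). lia. Qed.

Lemma incr_comp phi psi : incr phi -> incr psi -> incr (fun n => phi (psi n)).
Proof. intros H1 H2 n. apply incr_lt; auto. Qed.

Lemma archi e : 0 < e -> exists N : nat, forall n, (N <= n)%nat -> / (INR n + 1) < e.
Proof.
  intros He. destruct (archimed_cor1 e He) as [N [H1 H2]]. exists N. intros n Hn.
  apply Rle_lt_trans with (/ INR N); auto.
  apply Rinv_le_contravar. apply lt_0_INR; auto.
  apply le_INR in Hn. lra.
Qed.

Fixpoint extr (g : nat * nat -> nat) (n : nat) : nat :=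
  match n with O => g (O, O) | S k => g (S (extr g k), S k) end.

Lemma cluster_sub (u : nat -> R) l :
  (forall e, 0 < e -> forall N, exists p, (N <= p)%nat /\ Rabs (u p - l) < e) ->
  exists phi, incr phi /\ Un_cv (fun n => u (phi n)) l.
Proof.
  intros H.
  assert (H' : forall Nk : nat * nat, exists p, (fst Nk <= p)%nat /\ Rabs (u p - l) < / (INR (snd Nk) + 1)).
  { intros [N k]. apply H. apply Rinv_0_lt_compat. pose proof (pos_INR k). simpl. lra. }
  destruct (choice _ H') as [g Hg].
  exists (extr g). split.
  - intros n. simpl. destruct (Hg (S (extr g n), S n)) as [H1 _]. simpl in H1. lia.
  - intros e He. destruct (archi e He) as [N HN]. exists N. intros n Hn.
    unfold Rdist. apply Rlt_le_trans with (/ (INR n + 1)).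
    + destruct n; simpl.
      * destruct (Hg (O,O)) as [_ H2]. exact H2.
      * destruct (Hg (S (extr g n), S n)) as [_ H2]. exact H2.
    + left. apply HN. lia.
Qed.

Lemma BW1 (u : nat -> R) B : (forall n, Rabs (u n) <= B) ->
  exists phi, incr phi /\ Cauchy_crit (fun n => u (phi n)).
Proof.
  intros HB.
  destruct (Bolzano_Weierstrass u (fun c => -B <= c <= B) (compact_P3 (-B) B)) as [l Hl].
  { intros n. specialize (HB n). revert HB; unfold Rabs; destruct (Rcase_abs (u n)); lra. }
  destruct (cluster_sub u l) as [phi [H1 H2]].
  { intros e He N. destruct (Hl (disc l (mkposreal e He)) N) as [p [Hp1 Hp2]].
    - exists (mkposreal e He). intros y Hy. exact Hy.
    - exists p. split; auto. }
  exists phi. split; auto. apply CV_Cauchy. exists l. exact H2.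
Qed.

Lemma Cauchy_sub (u : nat -> R) psi : Cauchy_crit u -> incr psi -> Cauchy_crit (fun n => u (psi n)).
Proof.
  intros H Hp e He. destruct (H e He) as [N HN]. exists N. intros n m Hn Hm.
  apply HN; pose proof (incr_ge psi Hp n); pose proof (incr_ge psi Hp m); lia.
Qed.

Lemma unif_list {A : Type} (P : nat -> A -> Prop) :
  (forall n m a, (n <= m)%nat -> P n a -> P m a) ->
  (forall a, exists N, P N a) -> forall s : list A, exists N, forall a, List.In a s -> P N a.
Proof.
  intros Hm Hex s. induction s as [|a s IH].
  - exists O. intros a [].
  - destruct IH as [N1 H1]. destruct (Hex a) as [N2 H2]. exists (Nat.max N1 N2).
    intros b [<-|Hb]. apply Hm with N2; auto; lia. apply Hm with N1; auto; lia.
Qed.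


Module SsrAux.
Import ssreflect ssrbool eqtype seq.
Lemma in_In (T : eqType) (x : T) (s : seq T) : x \in s -> List.In x s.
Proof.
  elim: s => [|y s IH] //=. rewrite in_cons => /orP [/eqP ->|H]. by left. by right; apply: IH.
Qed.
Definition ordl d := enum 'I_d.
Lemma In_enum d (i : 'I_d) : List.In i (ordl d).
Proof. apply: in_In. by rewrite mem_enum. Qed.
Lemma size_enum d : length (enum 'I_d) = d.
Proof. exact: size_enum_ord. Qed.
End SsrAux.
Import SsrAux.

Lemma fmax_lt {A : Type} (f : A -> R) (s : list A) e :
  seq.foldr Rmax 0 (seq.map f s) < e <-> 0 < e /\ forall a, List.In a s -> f a < e.
Proof.
  induction s as [|a s IH]; simpl.
  - split. intros H; split; auto; intros _ []. tauto.
  - rewrite Rmax_Rlt, IH. split.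
    + intros [H1 [H2 H3]]. split; auto. intros b [<-|Hb]; auto.
    + intros [H1 H2]. auto.
Qed.

Lemma fmax_le {A : Type} (f : A -> R) (s : list A) e :
  seq.foldr Rmax 0 (seq.map f s) <= e <-> 0 <= e /\ forall a, List.In a s -> f a <= e.
Proof.
  induction s as [|a s IH]; simpl.
  - split. intros H; split; auto; intros _ []. tauto.
  - split.
    + intros H. assert (H1 : f a <= e) by (eapply Rle_trans; [apply Rmax_l|exact H]).
      assert (H2 : seq.foldr Rmax 0 (seq.map f s) <= e) by (eapply Rle_trans; [apply Rmax_r|exact H]).
      apply IH in H2. destruct H2 as [H2 H3]. split; auto. intros b [<-|Hb]; auto.
    + intros [H1 H2]. apply Rmax_lub; auto. apply IH. auto.
Qed.

Lemma fplus_ge {A : Type} (g : A -> R) (s : list A) a :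
  (forall b, 0 <= g b) -> List.In a s -> g a <= seq.foldr Rplus 0 (seq.map g s).
Proof.
  intros Hg. induction s as [|b s IH]; simpl. tauto.
  assert (0 <= seq.foldr Rplus 0 (seq.map g s)).
  { clear IH. induction s; simpl. lra. pose proof (Hg a0). lra. }
  intros [<-|Ha]. lra. pose proof (Hg b). specialize (IH Ha). lra.
Qed.

Lemma fplus_le {A : Type} (g : A -> R) (s : list A) c :
  (forall b, g b <= c) -> seq.foldr Rplus 0 (seq.map g s) <= INR (length s) * c.
Proof.
  intros Hg. induction s as [|b s IH]. simpl. lra.
  change (length (b::s)) with (S (length s)). rewrite S_INR. cbn [seq.foldr seq.map].
  specialize (Hg b). lra.
Qed.

Section Metric.
Variable d : nat.
Implicit Types x y z : pt d.

Lemma sdist_lt x y e : sdist x y < e <-> 0 < e /\ forall i, Rabs (x i - y i) < e.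
Proof.
  unfold sdist. rewrite fmax_lt. split; intros [H1 H2]; split; auto.
  intros i. apply H2, In_enum.
Qed.

Lemma sdist_le x y e : sdist x y <= e <-> 0 <= e /\ forall i, Rabs (x i - y i) <= e.
Proof.
  unfold sdist. rewrite fmax_le. split; intros [H1 H2]; split; auto.
  intros i. apply H2, In_enum.
Qed.

Lemma sdist_ge0 x y : 0 <= sdist x y.
Proof. destruct (proj1 (sdist_le x y _) (Rle_refl _)); auto. Qed.

Lemma sdist_coord x y i : Rabs (x i - y i) <= sdist x y.
Proof. destruct (proj1 (sdist_le x y _) (Rle_refl _)); auto. Qed.

Lemma sdist_sym x y : sdist x y = sdist y x.
Proof.
  apply Rle_antisym; apply sdist_le; split; try apply sdist_ge0; intros i;
  rewrite Rabs_minus_sym; apply sdist_coord.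
Qed.

Lemma sdist_tri x y z : sdist x z <= sdist x y + sdist y z.
Proof.
  apply sdist_le. split. pose proof (sdist_ge0 x y); pose proof (sdist_ge0 y z); lra.
  intros i. pose proof (sdist_coord x y i); pose proof (sdist_coord y z i).
  replace (x i - z i) with ((x i - y i) + (y i - z i)) by ring.
  eapply Rle_trans. apply Rabs_triang. lra.
Qed.

Lemma sdist_refl x : sdist x x = 0.
Proof.
  apply Rle_antisym; [|apply sdist_ge0]. apply sdist_le. split. lra.
  intros i. rewrite Rminus_diag, Rabs_R0. lra.
Qed.

Lemma sdist_eq x y : sdist x y = 0 -> x = y.
Proof.
  intros H. apply functional_extensionality. intros i. pose proof (sdist_coord x y i).
  rewrite H in H0. pose proof (Rabs_pos (x i - y i)).
  assert (Rabs (x i - y i) = 0) by lra. revert H2; unfold Rabs; destruct (Rcase_abs (x i - y i)); lra.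
Qed.

Lemma sdist_le_edist x y : sdist x y <= edist x y.
Proof.
  apply sdist_le. split. apply sqrt_pos. intros i. unfold edist.
  rewrite <- sqrt_Rsqr_abs. apply sqrt_le_1_alt. rewrite Rsqr_pow2.
  apply (fplus_ge (fun i => (x i - y i) ^ 2)). intros b. apply pow2_ge_0. apply In_enum.
Qed.

Lemma edist_le_sdist x y : edist x y <= sqrt (INR d) * sdist x y.
Proof.
  unfold edist. set (s := sdist x y).
  assert (Hs : 0 <= s) by apply sdist_ge0.
  rewrite <- (sqrt_Rsqr s Hs). rewrite <- sqrt_mult; [| apply pos_INR | apply Rle_0_sqr].
  apply sqrt_le_1_alt.
  match goal with |- seq.foldr _ _ (seq.map _ ?l) <= _ =>
    pose proof (fplus_le (fun i => (x i - y i)^2) l (Rsqr s)) as Hf end.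
  replace (INR (length _)) with (INR d) in Hf by (f_equal; symmetry; apply size_enum). apply Hf.
  intros i. pose proof (sdist_coord x y i). fold s in H. unfold Rsqr.
  revert H. unfold Rabs. destruct (Rcase_abs (x i - y i)); nra.
Qed.

Definition conv (u : nat -> pt d) (L : pt d) :=
  forall e, 0 < e -> exists N, forall n, (N <= n)%nat -> sdist (u n) L < e.

Lemma conv_sub u L phi : conv u L -> incr phi -> conv (fun n => u (phi n)) L.
Proof.
  intros H Hp e He. destruct (H e He) as [N HN]. exists N. intros n Hn.
  apply HN. pose proof (incr_ge phi Hp n). lia.
Qed.

Lemma conv_closed (A : pt d -> Prop) u L : closed_in_Rd A -> (forall n, A (u n)) -> conv u L -> A L.
Proof.
  intros HA Hu Hc. apply HA. intros e He. destruct (Hc e He) as [N HN].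
  exists (u N). split; auto. rewrite sdist_sym. apply HN. lia.
Qed.

Lemma conv_unique u L1 L2 : conv u L1 -> conv u L2 -> L1 = L2.
Proof.
  intros H1 H2. apply sdist_eq. apply Rle_antisym; [|apply sdist_ge0].
  apply Rnot_lt_le. intros Hlt. set (e := sdist L1 L2 / 2).
  assert (He : 0 < e) by (unfold e; lra).
  destruct (H1 e He) as [N1 HN1]. destruct (H2 e He) as [N2 HN2].
  specialize (HN1 (Nat.max N1 N2) ltac:(lia)). specialize (HN2 (Nat.max N1 N2) ltac:(lia)).
  pose proof (sdist_tri L1 (u (Nat.max N1 N2)) L2). rewrite sdist_sym in HN1. unfold e in *. lra.
Qed.

Definition bnd (u : nat -> pt d) := exists B, forall n, sdist (u n) zero_pt <= B.

Lemma BWd (u : nat -> pt d) : bnd u -> exists phi L, incr phi /\ conv (fun n => u (phi n)) L.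
Proof.
  intros [B HB].
  assert (HB' : forall n i, Rabs (u n i) <= B).
  { intros n i. pose proof (sdist_coord (u n) zero_pt i). pose proof (HB n). unfold zero_pt in *.
    rewrite Rminus_0_r in H. lra. }
  assert (Hl : forall s : list 'I_d, exists phi, incr phi /\
             forall i, List.In i s -> Cauchy_crit (fun n => u (phi n) i)).
  { induction s as [|a s [phi [Hp Hc]]].
    - exists (fun n => n). split. intros n; lia. intros i [].
    - destruct (BW1 (fun n => u (phi n) a) B) as [psi [Hps Hc2]]. intros n; apply HB'.
      exists (fun n => phi (psi n)). split. apply incr_comp; auto.
      intros i [<-|Hi]. exact Hc2. apply (Cauchy_sub (fun n => u (phi n) i)); auto. }
  destruct (Hl (ordl d)) as [phi [Hp Hc]].
  assert (HL : forall i, exists l, Un_cv (fun n => u (phi n) i) l).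
  { intros i. destruct (R_complete _ (Hc i (In_enum d i))) as [l Hl']. exists l; exact Hl'. }
  destruct (choice _ HL) as [L HLi].
  exists phi, L. split; auto.
  intros e He.
  destruct (unif_list (fun N i => forall n, (N <= n)%nat -> Rabs (u (phi n) i - L i) < e / 2))
    with (s := ordl d) as [N HN].
  { intros n m a Hnm H k Hk. apply H. lia. }
  { intros a. destruct (HLi a (e/2) ltac:(lra)) as [N HN]. exists N. exact HN. }
  exists N. intros n Hn. apply sdist_lt. split; auto. intros i.
  specialize (HN i (In_enum d i) n Hn). lra.
Qed.

End Metric.


Definition small (r : nat -> R) := forall e, 0 < e -> exists N, forall m, (N <= m)%nat -> r m < e.

Lemma small_sub r phi : small r -> incr phi -> small (fun m => r (phi m)).
Proof.
  intros H Hp e He. destruct (H e He) as [N HN]. exists N. intros m Hm. apply HN.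
  pose proof (incr_ge phi Hp m). lia.
Qed.

Lemma small_inv c : small (fun m => Rmin c (/ (INR m + 1))).
Proof.
  intros e He. destruct (archi e He) as [N HN]. exists N. intros m Hm.
  eapply Rle_lt_trans. apply Rmin_r. auto.
Qed.

Lemma edist_small d (x y : pt d) e : 0 < e -> sdist x y < e / (sqrt (INR d) + 1) -> edist x y < e.
Proof.
  intros He H. pose proof (edist_le_sdist d x y). pose proof (sqrt_pos (INR d)).
  pose proof (sdist_ge0 d x y). set (q := sqrt (INR d)) in *. set (s := sdist x y) in *.
  assert (s * (q + 1) < e).
  { apply Rmult_lt_compat_r with (r := q + 1) in H; [|lra].
    unfold Rdiv in H. rewrite Rmult_assoc, Rinv_l in H by lra. lra. }
  nra.
Qed.


Section Dyn.
Variable d : nat.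
Variables M M0 : pt d -> Prop.
Variable F : pt d -> pt d.
Hypothesis HMclosed : closed_in_Rd M.
Hypothesis HFmaps : forall x, M x -> M (F x).
Hypothesis HFcont : cont_on_set M F.
Hypothesis HM0closed : closed_in_Rd M0.
Hypothesis HF0 : forall x, M0 x -> M0 (F x).
Hypothesis HM0M : forall x, M0 x -> M x.
Hypothesis HF1 : forall x, M x -> ~ M0 x -> ~ M0 (F x).
Variable B : R.
Hypothesis HB : forall x, M x -> sdist (F x) zero_pt <= B.

Lemma cont_conv u L : (forall n, M (u n)) -> M L -> conv d u L -> conv d (fun n => F (u n)) (F L).
Proof.
  intros Hu HL Hc e He. destruct (HFcont L HL e He) as [eta [Heta H]].
  destruct (Hc eta Heta) as [N HN]. exists N. intros n Hn. rewrite sdist_sym.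
  apply H; auto. rewrite sdist_sym. auto.
Qed.

Lemma iter_M k x : M x -> M (Nat.iter k F x).
Proof. intros H. induction k; simpl; auto. Qed.

Lemma iter_M0 k x : M0 x -> M0 (Nat.iter k F x).
Proof. intros H. induction k; simpl; auto. Qed.

Lemma iter_cont k x : M x -> forall e, 0 < e -> exists eta, 0 < eta /\
  forall y, M y -> sdist x y < eta -> sdist (Nat.iter k F x) (Nat.iter k F y) < e.
Proof.
  intros Hx. induction k as [|k IH]; intros e He; simpl.
  - exists e. auto.
  - destruct (HFcont (Nat.iter k F x) (iter_M k x Hx) e He) as [eta1 [He1 H1]].
    destruct (IH eta1 He1) as [eta2 [He2 H2]]. exists eta2. split; auto.
    intros y Hy Hxy. apply H1. apply iter_M; auto. auto.
Qed.

Lemma notM0_sep v : ~ M0 v -> exists rho, 0 < rho /\ forall z, M0 z -> rho <= sdist v z.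
Proof.
  intros Hv. apply NNPP. intros Hn. apply Hv. apply HM0closed. intros e He.
  apply NNPP. intros Hn2. apply Hn. exists e. split; auto. intros z Hz.
  apply Rnot_lt_le. intros Hlt. apply Hn2. exists z. split; auto.
Qed.

Definition patch (xi : nat -> pt d) (a L : nat) (s e : pt d) : nat -> pt d :=
  fun k => if Nat.eqb k 0 then s else if Nat.eqb k L then e else xi (a + k)%nat.

Lemma patch_ok xi a L s e del :
  (1 <= L)%nat -> M s -> M e ->
  (forall k, (0 < k < L)%nat -> M (xi (a + k)%nat)) ->
  sdist (F s) (F (xi a)) < del / 3 -> sdist e (xi (a + L)%nat) < del / 3 ->
  (forall k, (k < L)%nat -> sdist (xi (a + S k)%nat) (F (xi (a + k)%nat)) < del / 3) ->
  ((~ M0 s /\ forall k, (0 < k < L)%nat -> ~ M0 (xi (a + k)%nat)) \/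
   (M0 e /\ forall k, (0 < k < L)%nat -> M0 (xi (a + k)%nat))) ->
  ap_pseudoorbit M M0 F del (patch xi a L s e) L /\ patch xi a L s e O = s /\ patch xi a L s e L = e.
Proof.
  intros HL Hs He Hxi Hs3 He3 Hst HM0c.
  assert (P0 : patch xi a L s e O = s) by reflexivity.
  assert (PL : patch xi a L s e L = e).
  { unfold patch. destruct (Nat.eqb_spec L 0). lia. rewrite Nat.eqb_refl. auto. }
  assert (Pk : forall k, (0 < k < L)%nat -> patch xi a L s e k = xi (a + k)%nat).
  { intros k Hk. unfold patch. destruct (Nat.eqb_spec k 0). lia. destruct (Nat.eqb_spec k L). lia. auto. }
  split; [|split; auto]. split; [auto|split].
  - intros j Hj. destruct (Nat.eq_dec j 0). subst; rewrite P0; auto.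
    destruct (Nat.eq_dec j L). subst; rewrite PL; auto. rewrite Pk by lia. apply Hxi. lia.
  - intros k Hk. split.
    + destruct HM0c as [[H1 H2]|[H1 H2]].
      * intros Hm. exfalso. destruct (Nat.eq_dec k 0). subst. rewrite P0 in Hm. auto.
        rewrite Pk in Hm by lia. apply (H2 k); auto; lia.
      * intros _. destruct (Nat.eq_dec (S k) L). rewrite e0, PL. auto. rewrite Pk by lia. apply H2. lia.
    + assert (T1 : sdist (patch xi a L s e (S k)) (xi (a + S k)%nat) < del / 3).
      { destruct (Nat.eq_dec (S k) L). rewrite e0, PL. auto.
        rewrite Pk by lia. rewrite sdist_refl. pose proof (sdist_ge0 _ e (xi (a+L)%nat)). lra. }
      assert (T3 : sdist (F (xi (a + k)%nat)) (F (patch xi a L s e k)) < del / 3).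
      { destruct (Nat.eq_dec k 0). subst. rewrite P0, Nat.add_0_r, sdist_sym. auto.
        rewrite Pk by lia. rewrite sdist_refl. pose proof (sdist_ge0 _ e (xi (a+L)%nat)). lra. }
      specialize (Hst k Hk).
      pose proof (sdist_tri _ (patch xi a L s e (S k)) (xi (a + S k)%nat) (F (patch xi a L s e k))).
      pose proof (sdist_tri _ (xi (a + S k)%nat) (F (xi (a + k)%nat)) (F (patch xi a L s e k))).
      lra.
Qed.

Lemma ap_le_trans x y z : ap_le M M0 F x y -> ap_le M M0 F y z -> ap_le M M0 F x z.
Proof.
  intros H1 H2 del Hdel.
  destruct (H1 del Hdel) as [xi1 [n1 [[Hn1 [HM1 Hs1]] [E10 E1n]]]].
  destruct (H2 del Hdel) as [xi2 [n2 [[Hn2 [HM2 Hs2]] [E20 E2n]]]].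
  set (zeta := fun k => if Nat.leb k n1 then xi1 k else xi2 (k - n1)%nat).
  assert (Z1 : forall k, (k <= n1)%nat -> zeta k = xi1 k).
  { intros k Hk. unfold zeta. destruct (Nat.leb_spec k n1). auto. lia. }
  assert (Z2 : forall k, (n1 <= k)%nat -> zeta k = xi2 (k - n1)%nat).
  { intros k Hk. unfold zeta. destruct (Nat.leb_spec k n1). assert (k = n1) by lia. subst k.
    rewrite Nat.sub_diag, E20, E1n. auto. auto. }
  exists zeta, (n1 + n2)%nat. split; [split; [lia|split]|split].
  - intros j Hj. destruct (Nat.le_ge_cases j n1). rewrite Z1; auto. rewrite Z2; auto. apply HM2. lia.
  - intros k Hk. destruct (Nat.lt_ge_cases k n1).
    + rewrite Z1, Z1 by lia. apply Hs1. auto.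
    + rewrite Z2, Z2 by lia. replace (S k - n1)%nat with (S (k - n1)) by lia. apply Hs2. lia.
  - rewrite Z1 by lia. auto.
  - rewrite Z2 by lia. replace (n1 + n2 - n1)%nat with n2 by lia. auto.
Qed.

Definition clus (w v : pt d) := exists psi, incr psi /\ conv d (fun n => Nat.iter (psi n) F w) v.

Lemma recur w v : M w -> clus w v -> (M0 w \/ ~ M0 v) -> R_ap M M0 F v.
Proof.
  intros Hw [psi [Hpsi Hc]] Hcase.
  assert (Hv : M v). { apply (conv_closed d M (fun n => Nat.iter (psi n) F w) v HMclosed); auto. intros n; apply iter_M; auto. }
  assert (Hrec : ap_le M M0 F v v).
  { intros del Hdel.
    destruct (HFcont v Hv (del/3) ltac:(lra)) as [eta [Heta Hct]].
    assert (Hrho : exists rho, 0 < rho /\ (~ M0 v -> forall z, M0 z -> rho <= sdist v z)).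
    { destruct (classic (M0 v)) as [Hm|Hm].
      - exists 1. split. lra. tauto.
      - destruct (notM0_sep v Hm) as [rho [H1 H2]]. exists rho. auto. }
    destruct Hrho as [rho [Hrho Hrho2]].
    set (eps := Rmin eta (Rmin (del/3) rho)).
    assert (Heps : 0 < eps). { unfold eps. repeat apply Rmin_pos; lra. }
    destruct (Hc eps Heps) as [N HN].
    set (a := psi N). set (L := (psi (S N) - psi N)%nat).
    assert (HaL : (a + L)%nat = psi (S N)). { unfold a, L. pose proof (Hpsi N). lia. }
    assert (HL : (1 <= L)%nat). { unfold L. pose proof (Hpsi N). lia. }
    assert (Ha : sdist (Nat.iter a F w) v < eps) by (apply HN; lia).
    assert (HaL2 : sdist (Nat.iter (a + L) F w) v < eps) by (rewrite HaL; apply HN; lia).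
    assert (E1 : eps <= eta) by apply Rmin_l.
    assert (E2 : eps <= del/3) by (eapply Rle_trans; [apply Rmin_r|apply Rmin_l]).
    assert (E3 : eps <= rho) by (eapply Rle_trans; [apply Rmin_r|apply Rmin_r]).
    destruct (patch_ok (fun k => Nat.iter k F w) a L v v del) as [Hpo [H0 HLe]]; auto.
    - intros k _. apply iter_M; auto.
    - apply Hct. apply iter_M; auto. rewrite sdist_sym. lra.
    - rewrite sdist_sym. lra.
    - intros k _. rewrite Nat.add_succ_r. simpl. rewrite sdist_refl. lra.
    - destruct Hcase as [Hw0|Hv0].
      + right. split. apply (conv_closed d M0 (fun n => Nat.iter (psi n) F w) v HM0closed); auto. intros n; apply iter_M0; auto.
        intros k _. apply iter_M0. auto.
      + left. split; auto. intros k Hk Hm.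
        assert (Hm2 : M0 (Nat.iter (a + L) F w)).
        { replace (a + L)%nat with ((L - k) + (a + k))%nat by lia. rewrite Nat.iter_add. apply iter_M0. auto. }
        specialize (Hrho2 Hv0 _ Hm2). rewrite sdist_sym in Hrho2. lra.
    - exists (patch (fun k => Nat.iter k F w) a L v v), L. auto. }
  split; auto.
Qed.

Lemma orbit_bnd u : M u -> bnd d (fun k => Nat.iter (S k) F u).
Proof. intros Hu. exists B. intros n. simpl. apply HB. apply iter_M. auto. Qed.

Lemma omega_rec u : M u -> forall e, 0 < e -> exists k v, R_ap M M0 F v /\ sdist (Nat.iter k F u) v < e.
Proof.
  intros Hu e He.
  destruct (BWd d _ (orbit_bnd u Hu)) as [phi [t [Hphi Hct]]].
  assert (Hclt : clus u t). { exists (fun n => S (phi n)). split. intros n. specialize (Hphi n). lia. exact Hct. }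
  assert (Ht : M t). { apply (conv_closed d M (fun n => Nat.iter (S (phi n)) F u) t HMclosed); auto. intros n; apply iter_M; auto. }
  destruct (classic (M0 t)) as [Ht0|Ht0].
  - destruct (BWd d _ (orbit_bnd t Ht)) as [phi' [v [Hphi' Hcv]]].
    assert (Hclv : clus t v). { exists (fun n => S (phi' n)). split. intros n. specialize (Hphi' n). lia. exact Hcv. }
    pose proof (recur t v Ht Hclv (or_introl Ht0)) as Hv.
    destruct (Hcv (e/2) ltac:(lra)) as [N1 HN1]. specialize (HN1 N1 (le_n _)).
    set (p := S (phi' N1)). fold p in HN1.
    destruct (iter_cont p t Ht (e/2) ltac:(lra)) as [eta [Heta Hit]].
    destruct (Hct eta Heta) as [N2 HN2]. specialize (HN2 N2 (le_n _)).
    exists (p + S (phi N2))%nat, v. split; auto. rewrite Nat.iter_add.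
    assert (sdist (Nat.iter p F t) (Nat.iter p F (Nat.iter (S (phi N2)) F u)) < e/2).
    { apply Hit. apply iter_M; auto. rewrite sdist_sym; auto. }
    pose proof (sdist_tri _ (Nat.iter p F (Nat.iter (S (phi N2)) F u)) (Nat.iter p F t) v).
    rewrite sdist_sym in H. lra.
  - pose proof (recur u t Hu Hclt (or_intror Ht0)) as Hv.
    destruct (Hct e He) as [N HN]. exists (S (phi N)), t. split; auto.
Qed.

Lemma partb : forall delta', 0 < delta' ->
     exists delta n0, 0 < delta /\ delta < delta' /\ le 1 n0 /\
       forall (xi : nat -> pt d) (n : nat),
         ap_pseudoorbit M M0 F delta xi n -> lt n0 n ->
         exists j, le j n /\ ap_nbhd M delta' (R_ap M M0 F) (xi j).
Proof.
  intros dp Hdp. apply NNPP. intros Hn.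
  set (dm := fun m : nat => Rmin (dp / 2) (/ (INR m + 1))).
  assert (Hdm : forall m, 0 < dm m /\ dm m < dp).
  { intros m. unfold dm. split. apply Rmin_pos. lra. apply Rinv_0_lt_compat. pose proof (pos_INR m); lra.
    eapply Rle_lt_trans. apply Rmin_l. lra. }
  assert (Hex : forall m, exists p : (nat -> pt d) * nat,
     ap_pseudoorbit M M0 F (dm m) (fst p) (snd p) /\ lt (S m) (snd p) /\
     forall j, le j (snd p) -> ~ ap_nbhd M dp (R_ap M M0 F) (fst p j)).
  { intros m. apply NNPP. intros Hm. apply Hn. exists (dm m), (S m).
    destruct (Hdm m) as [H1 H2]. split; auto. split; auto. split. lia.
    intros xi n Hpo Hlt. apply NNPP. intros Hj. apply Hm. exists (xi, n). simpl.
    split; auto. split; auto. intros j Hjn Hnb. apply Hj. exists j. auto. }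
  destruct (choice _ Hex) as [g Hg].
  set (xi := fun m => fst (g m)). set (len := fun m => snd (g m)).
  assert (Hpo : forall m, ap_pseudoorbit M M0 F (dm m) (xi m) (len m)) by (intros m; apply Hg).
  assert (Hlen : forall m, lt (S m) (len m)) by (intros m; apply Hg).
  assert (Hnot : forall m j, le j (len m) -> ~ ap_nbhd M dp (R_ap M M0 F) (xi m j)) by (intros m; apply Hg).
  assert (Hbnd : bnd d (fun m => xi m 1%nat)).
  { exists (dp + B). intros m. destruct (Hpo m) as [H1 [H2 H3]].
    destruct (H3 O ltac:(lia)) as [_ H4]. pose proof (HB _ (H2 O ltac:(lia))).
    pose proof (sdist_tri d (xi m 1%nat) (F (xi m O)) zero_pt). destruct (Hdm m). lra. }
  destruct (BWd d _ Hbnd) as [phi [u [Hphi Hcu]]].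
  assert (Hu : M u).
  { apply (conv_closed d M (fun m => xi (phi m) 1%nat) u HMclosed); auto.
    intros m. destruct (Hpo (phi m)) as [_ [H2 _]]. apply H2. pose proof (Hlen (phi m)). lia. }
  assert (Hsm : small (fun m => dm (phi m))) by (apply small_sub; auto; apply small_inv).
  assert (Claim : forall k e, 0 < e -> exists N, forall m, (N <= m)%nat ->
            sdist (xi (phi m) (S k)) (Nat.iter k F u) < e).
  { induction k as [|k IH]; intros e He.
    - destruct (Hcu e He) as [N HN]. exists N. exact HN.
    - destruct (HFcont (Nat.iter k F u) (iter_M k u Hu) (e/2) ltac:(lra)) as [eta [Heta Hct]].
      destruct (IH eta Heta) as [N1 HN1]. destruct (Hsm (e/2) ltac:(lra)) as [N2 HN2].
      exists (Nat.max (S k) (Nat.max N1 N2)). intros m Hm.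
      specialize (HN1 m ltac:(lia)). specialize (HN2 m ltac:(lia)).
      pose proof (Hlen (phi m)). pose proof (incr_ge phi Hphi m).
      destruct (Hpo (phi m)) as [_ [HM Hst]].
      destruct (Hst (S k) ltac:(lia)) as [_ Hs].
      assert (sdist (F (Nat.iter k F u)) (F (xi (phi m) (S k))) < e/2).
      { apply Hct. apply HM. lia. rewrite sdist_sym. auto. }
      simpl. pose proof (sdist_tri d (xi (phi m) (S (S k))) (F (xi (phi m) (S k))) (F (Nat.iter k F u))).
      rewrite sdist_sym in H1. lra. }
  set (ep := dp / (sqrt (INR d) + 1)).
  assert (Hep : 0 < ep). { unfold ep. pose proof (sqrt_pos (INR d)). apply Rdiv_lt_0_compat; lra. }
  destruct (omega_rec u Hu (ep/2) ltac:(lra))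
    as [k [w [Hw Hkw]]].
  destruct (Claim k (ep/2) ltac:(lra)) as [N HN].
  specialize (HN (Nat.max N k) ltac:(lia)).
  set (m := Nat.max N k) in *.
  pose proof (Hlen (phi m)). pose proof (incr_ge phi Hphi m).
  apply (Hnot (phi m) (S k)). lia. split.
  - destruct (Hpo (phi m)) as [_ [HM _]]. apply HM. lia.
  - exists w. split; auto. apply edist_small; auto.
    pose proof (sdist_tri d (xi (phi m) (S k)) (Nat.iter k F u) w). fold ep. lra.
Qed.


Lemma pseudo_notM0 del xi n : ap_pseudoorbit M M0 F del xi n -> ~ M0 (xi n) ->
  forall k, (k <= n)%nat -> ~ M0 (xi k).
Proof.
  intros [_ [_ Hs]] Hn k Hk Hm. apply Hn.
  assert (H : forall j, (k + j <= n)%nat -> M0 (xi (k + j)%nat)).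
  { induction j; intros Hj. rewrite Nat.add_0_r; auto. rewrite Nat.add_succ_r.
    apply (Hs (k+j)%nat). lia. apply IHj. lia. }
  replace n with (k + (n - k))%nat by lia. apply H. lia.
Qed.

Lemma pseudo_mono del del' xi n : del' <= del -> ap_pseudoorbit M M0 F del' xi n -> ap_pseudoorbit M M0 F del xi n.
Proof.
  intros Hd [H1 [H2 H3]]. split; auto. split; auto. intros j Hj. destruct (H3 j Hj). split; auto. lra.
Qed.

Lemma dist_lt_mono (x : pt d) A r r' : r' <= r -> dist_set_lt x A r' -> dist_set_lt x A r.
Proof. intros Hr [y [H1 H2]]. exists y. split; auto. lra. Qed.

Lemma chain_piece del dl xi n a b s e :
  0 < del -> ap_pseudoorbit M M0 F dl xi n -> dl <= del/3 -> (a < b)%nat -> (b <= n)%nat ->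
  M s -> M e -> ~ M0 s -> ~ M0 (xi n) ->
  sdist (F s) (F (xi a)) < del/3 -> sdist e (xi b) < del/3 ->
  exists zeta L, ap_pseudoorbit M M0 F del zeta L /\ zeta O = s /\ zeta L = e.
Proof.
  intros Hdel Hpo Hdl Hab Hbn Hs He Hs0 Hn0 H1 H2.
  destruct (patch_ok xi a (b - a) s e del) as [P1 [P2 P3]]; auto.
  - lia.
  - intros k Hk. destruct Hpo as [_ [HM _]]. apply HM. lia.
  - replace (a + (b-a))%nat with b by lia. auto.
  - intros k Hk. destruct Hpo as [_ [_ Hst]]. destruct (Hst (a+k)%nat ltac:(lia)) as [_ H].
    rewrite Nat.add_succ_r. lra.
  - left. split; auto. intros k Hk. apply (pseudo_notM0 dl xi n); auto; lia.
  - exists (patch xi a (b-a) s e), (b-a)%nat. auto.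
Qed.

Lemma seq_chain (X : nat -> nat -> pt d) (len A Bi : nat -> nat) (dl : nat -> R) s e :
  (forall m, ap_pseudoorbit M M0 F (dl m) (X m) (len m)) -> small dl ->
  (forall m, (A m < Bi m)%nat /\ (Bi m <= len m)%nat) ->
  (forall m, ~ M0 (X m (len m))) ->
  M s -> M e -> ~ M0 s ->
  conv d (fun m => X m (A m)) s -> conv d (fun m => X m (Bi m)) e ->
  ap_le M M0 F s e.
Proof.
  intros Hpo Hsm Hab Hn Hs He Hs0 Hcs Hce del Hdel.
  destruct (HFcont s Hs (del/3) ltac:(lra)) as [eta [Heta Hct]].
  destruct (Hcs eta Heta) as [N1 HN1]. destruct (Hce (del/3) ltac:(lra)) as [N2 HN2].
  destruct (Hsm (del/3) ltac:(lra)) as [N3 HN3].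
  set (m := Nat.max N1 (Nat.max N2 N3)).
  destruct (Hab m) as [Hab1 Hab2].
  assert (G1 : dl m <= del/3) by (left; apply HN3; unfold m; lia).
  assert (G2 : sdist (F s) (F (X m (A m))) < del/3).
  { apply Hct. destruct (Hpo m) as [_ [HM _]]. apply HM. lia.
    rewrite sdist_sym; apply HN1; unfold m; lia. }
  assert (G3 : sdist e (X m (Bi m)) < del/3) by (rewrite sdist_sym; apply HN2; unfold m; lia).
  apply (chain_piece del (dl m) (X m) (len m) (A m) (Bi m) s e); auto.
Qed.

Lemma conv_close (x a : nat -> pt d) L r : conv d a L -> small r ->
  (forall m, sdist (x m) (a m) < r m) -> conv d x L.
Proof.
  intros Hc Hs Hr e He. destruct (Hc (e/2) ltac:(lra)) as [N1 HN1].
  destruct (Hs (e/2) ltac:(lra)) as [N2 HN2]. exists (Nat.max N1 N2). intros m Hm.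
  pose proof (sdist_tri d (x m) (a m) L). specialize (HN1 m ltac:(lia)). specialize (HN2 m ltac:(lia)).
  specialize (Hr m). lra.
Qed.

Lemma least (P : nat -> Prop) : (exists n, P n) -> exists n, P n /\ forall k, (k < n)%nat -> ~ P k.
Proof.
  intros [n Hn]. revert Hn. induction n as [n IH] using (well_founded_induction Wf_nat.lt_wf). intros Hn.
  destruct (classic (exists k, (k < n)%nat /\ P k)) as [[k [Hk1 Hk2]]|Hno].
  - apply (IH k Hk1 Hk2).
  - exists n. split; auto. intros k Hk Hp. apply Hno. exists k. auto.
Qed.

Lemma fin_min (P : nat -> R -> Prop) n : (forall i r r', 0 < r' <= r -> P i r -> P i r') ->
  (forall i, lt i n -> exists r, 0 < r /\ P i r) -> exists r, 0 < r /\ forall i, lt i n -> P i r.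
Proof.
  induction n as [|n IHn]; intros Hm H.
  - exists 1. split. lra. intros i Hi. lia.
  - destruct IHn as [r1 [Hr1 H1]]; auto. destruct (H n) as [r2 [Hr2 H2]]; auto.
    exists (Rmin r1 r2). split. apply Rmin_pos; auto. intros i Hi. destruct (Nat.eq_dec i n).
    + subst. apply Hm with r2; auto. split. apply Rmin_pos; auto. apply Rmin_r.
    + apply Hm with r1. split. apply Rmin_pos; auto. apply Rmin_l. apply H1; lia.
Qed.

Lemma small_inv' : small (fun m => / (INR m + 1)).
Proof. intros e He. destruct (archi e He) as [N HN]. exists N. auto. Qed.

Variable v : nat.
Variable K : nat -> pt d -> Prop.
Hypothesis HKbasic : forall i, lt i v -> ap_basic_class M M0 F (K i).
Hypothesis HKM : forall i, lt i v -> forall x, K i x -> M x /\ ~ M0 x.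
Hypothesis HKclosed : forall i, lt i v -> closed_in_Rd (K i).

Lemma Rap_bnd x : R_ap M M0 F x -> sdist x zero_pt <= 1 + B.
Proof.
  intros [H _]. destruct (H 1 Rlt_0_1) as [xi [n [[Hn [HM Hs]] [_ Hxn]]]].
  destruct (Hs (n-1)%nat ltac:(lia)) as [_ Hd]. replace (S (n-1)) with n in Hd by lia.
  rewrite Hxn in Hd. pose proof (HB _ (HM (n-1)%nat ltac:(lia))).
  pose proof (sdist_tri d x (F (xi (n-1)%nat)) zero_pt). lra.
Qed.

Lemma K_Rap i x : lt i v -> K i x -> R_ap M M0 F x.
Proof. intros Hi Hx. destruct (HKbasic i Hi) as [c [Hc HK]]. apply HK in Hx. tauto. Qed.

Lemma K_bnd i x : lt i v -> K i x -> sdist x zero_pt <= 1 + B.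
Proof. intros. apply Rap_bnd. eapply K_Rap; eauto. Qed.

Lemma class_le i x y : lt i v -> K i x -> K i y -> ap_le M M0 F x y.
Proof.
  intros Hi Hx Hy. destruct (HKbasic i Hi) as [c [Hc HK]].
  apply HK in Hx. apply HK in Hy. destruct Hx as [_ [Hx1 Hx2]]. destruct Hy as [_ [Hy1 Hy2]].
  apply ap_le_trans with c; auto.
Qed.

Lemma class_in i x z : lt i v -> K i x -> ap_le M M0 F z x -> ap_le M M0 F x z -> K i z.
Proof.
  intros Hi Hx Hzx Hxz. destruct (HKbasic i Hi) as [c [Hc HK]].
  pose proof Hx as Hx'. apply HK in Hx'. destruct Hx' as [_ [Hx1 Hx2]].
  apply HK. split. split; apply ap_le_trans with x; auto.
  split. apply ap_le_trans with x; auto. apply ap_le_trans with x; auto.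
Qed.

Lemma sep_K i : lt i v -> exists r, 0 < r /\ forall x z, K i x -> M0 z -> r <= sdist x z.
Proof.
  intros Hi. apply NNPP. intros Hn.
  assert (Hex : forall m, exists p : pt d * pt d, K i (fst p) /\ M0 (snd p) /\
                 sdist (fst p) (snd p) < / (INR m + 1)).
  { intros m. apply NNPP. intros Hm. apply Hn. exists (/ (INR m + 1)). split.
    apply Rinv_0_lt_compat. pose proof (pos_INR m). lra.
    intros x z Hx Hz. apply Rnot_lt_le. intros Hlt. apply Hm. exists (x, z). auto. }
  destruct (choice _ Hex) as [g Hg].
  assert (Hb : bnd d (fun m => fst (g m))).
  { exists (1 + B). intros m. apply (K_bnd i); auto. apply Hg. }
  destruct (BWd d _ Hb) as [phi [L [Hphi HcL]]].
  assert (HL : K i L).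
  { apply (conv_closed d (K i) (fun m => fst (g (phi m))) L); auto. intros m; apply Hg. }
  assert (HL0 : M0 L).
  { apply (conv_closed d M0 (fun m => snd (g (phi m))) L); auto. intros m; apply Hg.
    apply (conv_close _ (fun m => fst (g (phi m))) L (fun m => / (INR (phi m) + 1))); auto.
    apply (small_sub (fun m => / (INR m + 1)) phi small_inv' Hphi).
    intros m. rewrite sdist_sym. apply Hg. }
  apply (HKM i Hi L HL). auto.
Qed.

Lemma sep_all : exists th0, 0 < th0 /\ forall i, lt i v -> forall x z, K i x -> M0 z -> th0 <= sdist x z.
Proof.
  apply (fin_min (fun i r => forall x z, K i x -> M0 z -> r <= sdist x z)).
  - intros i r r' Hr H x z Hx Hz. specialize (H x z Hx Hz). lra.
  - apply sep_K.
Qed.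

Definition dmf (c : R) (m : nat) := Rmin c (/ (INR m + 1)).
Lemma dmf_pos c m : 0 < c -> 0 < dmf c m.
Proof. intros Hc. unfold dmf. apply Rmin_pos; auto. apply Rinv_0_lt_compat. pose proof (pos_INR m). lra. Qed.
Lemma dmf_le c m : dmf c m <= c.
Proof. apply Rmin_l. Qed.

Lemma lim_class i i' th0 c : lt i v -> lt i' v ->
  (forall i, lt i v -> forall x z, K i x -> M0 z -> th0 <= sdist x z) -> 0 < c -> c < th0 ->
  (forall m, exists xi n, ap_pseudoorbit M M0 F (dmf c m) xi n /\
     dist_set_lt (xi O) (K i) (dmf c m) /\ dist_set_lt (xi n) (K i') (dmf c m)) ->
  class_ap_le M M0 F (K i) (K i').
Proof.
  intros Hi Hi' Hsep Hc Hcth H.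
  assert (H' : forall m, exists p : (nat -> pt d) * nat, ap_pseudoorbit M M0 F (dmf c m) (fst p) (snd p) /\
     dist_set_lt (fst p O) (K i) (dmf c m) /\ dist_set_lt (fst p (snd p)) (K i') (dmf c m)).
  { intros m. destruct (H m) as [xi [n Hx]]. exists (xi, n). exact Hx. }
  destruct (choice _ H') as [g Hg].
  set (X := fun m => fst (g m)). set (len := fun m => snd (g m)).
  assert (HX : forall m, ap_pseudoorbit M M0 F (dmf c m) (X m) (len m)) by (intros m; apply Hg).
  assert (Ha : forall m, exists a, K i a /\ sdist (X m O) a < dmf c m) by (intros m; apply Hg).
  assert (Hb : forall m, exists b, K i' b /\ sdist (X m (len m)) b < dmf c m) by (intros m; apply Hg).
  clearbody X len. clear Hg H H'.
  destruct (choice _ Ha) as [a Ha']. destruct (choice _ Hb) as [b Hb'].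
  assert (Hba : bnd d a) by (exists (1+B); intros m; apply (K_bnd i); auto; apply Ha').
  destruct (BWd d _ Hba) as [phi1 [y [Hp1 Hy]]].
  assert (Hbb : bnd d (fun m => b (phi1 m))) by (exists (1+B); intros m; apply (K_bnd i'); auto; apply Hb').
  destruct (BWd d _ Hbb) as [phi2 [y' [Hp2 Hy']]].
  pose (psi := fun m => phi1 (phi2 m)).
  assert (Hpsi : incr psi) by (unfold psi; apply incr_comp; auto).
  assert (Hya : conv d (fun m => a (psi m)) y) by (apply (conv_sub d (fun m => a (phi1 m)) y phi2); auto).
  assert (HyK : K i y) by (apply (conv_closed d (K i) (fun m => a (phi1 m)) y); auto; intros m; apply Ha').
  assert (Hy'K : K i' y') by (apply (conv_closed d (K i') (fun m => b (phi1 (phi2 m))) y'); auto; intros m; apply Hb').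
  assert (Hsm : small (fun m => dmf c (psi m))) by (apply (small_sub (dmf c)); auto; apply small_inv).
  assert (Hyy : ap_le M M0 F y y').
  { apply (seq_chain (fun m => X (psi m)) (fun m => len (psi m)) (fun _ => O) (fun m => len (psi m))
           (fun m => dmf c (psi m))); auto.
    - intros m. destruct (HX (psi m)) as [Hn _]. split; lia.
    - intros m Hm0. destruct (Hb' (psi m)) as [HbK Hbd]. pose proof (Hsep i' Hi' _ _ HbK Hm0).
      rewrite sdist_sym in H. pose proof (dmf_le c (psi m)). lra.
    - apply (HKM i Hi). auto.
    - apply (HKM i' Hi'). auto.
    - apply (HKM i Hi). auto.
    - apply (conv_close _ (fun m => a (psi m)) y (fun m => dmf c (psi m))); auto.
      intros m. apply Ha'.
    - apply (conv_close _ (fun m => b (psi m)) y' (fun m => dmf c (psi m))); auto.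
      intros m. apply Hb'. }
  intros x x' Hx Hx'. apply ap_le_trans with y. apply (class_le i); auto.
  apply ap_le_trans with y'; auto. apply (class_le i'); auto.
Qed.

Lemma exc i th0 th : lt i v ->
  (forall i, lt i v -> forall x z, K i x -> M0 z -> th0 <= sdist x z) -> 0 < th -> th < th0 ->
  (forall m, exists xi n j, ap_pseudoorbit M M0 F (dmf (th/2) m) xi n /\
     dist_set_lt (xi O) (K i) (dmf (th/2) m) /\ dist_set_lt (xi n) (K i) (dmf (th/2) m) /\
     le 1 j /\ le j n /\ dist_set_gt (xi j) (K i) th) -> False.
Proof.
  intros Hi Hsep Hth Hth0 H.
  set (c := th / 2) in *. assert (Hc : 0 < c) by (unfold c; lra). assert (Hc2 : c < th) by (unfold c; lra).
  set (r1 := (th + th0) / 2). assert (Hr1 : th < r1 < th0) by (unfold r1; lra).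
  assert (H' : forall m, exists p : (nat -> pt d) * nat * nat,
     ap_pseudoorbit M M0 F (dmf c m) (fst (fst p)) (snd (fst p)) /\
     dist_set_lt (fst (fst p) O) (K i) (dmf c m) /\
     dist_set_lt (fst (fst p) (snd (fst p))) (K i) (dmf c m) /\
     (1 <= snd p)%nat /\ (snd p < snd (fst p))%nat /\ dist_set_gt (fst (fst p) (snd p)) (K i) th /\
     exists cc, K i cc /\ sdist (fst (fst p) (pred (snd p))) cc < r1).
  { intros m. destruct (H m) as [xi [n [j0 [Hpo [H0 [Hn [Hj1 [Hjn Hgt]]]]]]]].
    destruct (least (fun j => (1 <= j <= n)%nat /\ dist_set_gt (xi j) (K i) th)) as [j [[Hj Hg] Hmin]].
    { exists j0. auto. }
    pose proof (dmf_le c m).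
    exists (xi, n, j). simpl.
    split; auto. split; auto. split; auto. split; [lia|]. split.
    - assert (j <> n).
      { intros E. subst j. destruct Hn as [bb [Hbb Hbd]]. destruct Hg as [r [Hr Hr2]].
        specialize (Hr2 bb Hbb). lra. }
      lia.
    - split; auto.
      destruct (Nat.eq_dec j 1) as [E|E].
      + subst j. simpl. destruct H0 as [cc [Hcc Hcd]]. exists cc. split; auto. lra.
      + assert (Hng : ~ dist_set_gt (xi (pred j)) (K i) th).
        { intros Hgg. apply (Hmin (pred j)). lia. split; auto; lia. }
        apply NNPP. intros Hno. apply Hng. exists r1. split. lra. intros y Hy.
        apply Rnot_lt_le. intros Hlt. apply Hno. exists y. auto. }
  destruct (choice _ H') as [g Hg].
  set (X := fun m => fst (fst (g m))). set (len := fun m => snd (fst (g m))). set (J := fun m => snd (g m)).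
  assert (HX : forall m, ap_pseudoorbit M M0 F (dmf c m) (X m) (len m)) by (intros m; apply Hg).
  assert (Ha : forall m, exists a, K i a /\ sdist (X m O) a < dmf c m) by (intros m; apply Hg).
  assert (Hb : forall m, exists b, K i b /\ sdist (X m (len m)) b < dmf c m) by (intros m; apply Hg).
  assert (HJ : forall m, (1 <= J m)%nat /\ (J m < len m)%nat) by (intros m; split; apply Hg).
  assert (Hgt : forall m y, K i y -> th <= sdist (X m (J m)) y).
  { intros m y Hy. destruct (Hg m) as [_ [_ [_ [_ [_ [[r [Hr Hr2]] _]]]]]].
    specialize (Hr2 y Hy). unfold X, J. lra. }
  assert (Hcc : forall m, exists cc, K i cc /\ sdist (X m (pred (J m))) cc < r1) by (intros m; apply Hg).
  clearbody X len J. clear Hg H H'.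
  destruct (choice _ Ha) as [a Ha']. destruct (choice _ Hb) as [b Hb']. destruct (choice _ Hcc) as [cc Hcc'].
  set (P := fun m => X m (pred (J m))).
  assert (HPM : forall m, M (P m)).
  { intros m. destruct (HX m) as [_ [HM _]]. apply HM. pose proof (HJ m). lia. }
  assert (HbP : bnd d P).
  { exists (r1 + (1 + B)). intros m. destruct (Hcc' m) as [HK Hd].
    pose proof (K_bnd i _ Hi HK). pose proof (sdist_tri d (P m) (cc m) zero_pt). unfold P in *. lra. }
  assert (Hba : bnd d a) by (exists (1+B); intros m; apply (K_bnd i); auto; apply Ha').
  destruct (BWd d _ Hba) as [phi1 [y [Hp1 Hy]]].
  assert (Hbb : bnd d (fun m => b (phi1 m))) by (exists (1+B); intros m; apply (K_bnd i); auto; apply Hb').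
  destruct (BWd d _ Hbb) as [phi2 [y' [Hp2 Hy']]].
  assert (HbP2 : bnd d (fun m => P (phi1 (phi2 m)))) by (destruct HbP as [BB HBB]; exists BB; auto).
  destruct (BWd d _ HbP2) as [phi3 [w [Hp3 Hw]]].
  pose (psi := fun m => phi1 (phi2 (phi3 m))).
  assert (Hp23 : incr (fun m => phi2 (phi3 m))) by (apply incr_comp; auto).
  assert (Hpsi : incr psi) by (unfold psi; apply incr_comp; auto).
  assert (Hya : conv d (fun m => a (psi m)) y) by (apply (conv_sub d (fun m => a (phi1 m)) y (fun m => phi2 (phi3 m))); auto).
  assert (Hyb : conv d (fun m => b (psi m)) y') by (apply (conv_sub d (fun m => b (phi1 (phi2 m))) y' phi3); auto).
  assert (HyK : K i y) by (apply (conv_closed d (K i) (fun m => a (phi1 m)) y); auto; intros m; apply Ha').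
  assert (Hy'K : K i y') by (apply (conv_closed d (K i) (fun m => b (phi1 (phi2 m))) y'); auto; intros m; apply Hb').
  assert (Hsm : small (fun m => dmf c (psi m))) by (apply (small_sub (dmf c)); auto; apply small_inv).
  assert (HMw : M w) by (apply (conv_closed d M (fun m => P (psi m)) w); auto).
  assert (Hw0 : ~ M0 w).
  { intros Hw0. destruct (Hw (th0 - r1) ltac:(lra)) as [N HN]. specialize (HN N (le_n _)).
    destruct (Hcc' (psi N)) as [HK Hd]. pose proof (Hsep i Hi _ _ HK Hw0).
    pose proof (sdist_tri d (cc (psi N)) (P (psi N)) w). pose proof (sdist_sym d (cc (psi N)) (P (psi N))).
    unfold P, psi in *. lra. }
  assert (HFw : conv d (fun m => F (P (psi m))) (F w)).
  { apply cont_conv; auto. }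
  assert (Hz : conv d (fun m => X (psi m) (J (psi m))) (F w)).
  { apply (conv_close _ (fun m => F (P (psi m))) (F w) (fun m => dmf c (psi m))); auto.
    intros m. destruct (HX (psi m)) as [_ [_ Hst]]. pose proof (HJ (psi m)).
    destruct (Hst (pred (J (psi m))) ltac:(lia)) as [_ Hs]. unfold P.
    replace (S (pred (J (psi m)))) with (J (psi m)) in Hs by lia. exact Hs. }
  assert (HzK : ~ K i (F w)).
  { intros HK. destruct (Hz th Hth) as [N HN]. specialize (HN N (le_n _)).
    specialize (Hgt (psi N) _ HK). lra. }
  assert (Hn0 : forall m, ~ M0 (X (psi m) (len (psi m)))).
  { intros m Hm0. destruct (Hb' (psi m)) as [HbK Hbd]. pose proof (Hsep i Hi _ _ HbK Hm0).
    rewrite sdist_sym in H. pose proof (dmf_le c (psi m)). lra. }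
  assert (HyM : M y /\ ~ M0 y) by (apply (HKM i Hi); auto).
  assert (Hy'M : M y' /\ ~ M0 y') by (apply (HKM i Hi); auto).
  assert (H1 : ap_le M M0 F y (F w)).
  { apply (seq_chain (fun m => X (psi m)) (fun m => len (psi m)) (fun _ => O) (fun m => J (psi m))
           (fun m => dmf c (psi m))); auto; try tauto.
    - intros m. pose proof (HJ (psi m)). split; lia.
    - apply (conv_close _ (fun m => a (psi m)) y (fun m => dmf c (psi m))); auto.
      intros m. apply Ha'. }
  assert (H2 : ap_le M M0 F (F w) y').
  { apply (seq_chain (fun m => X (psi m)) (fun m => len (psi m)) (fun m => J (psi m)) (fun m => len (psi m))
           (fun m => dmf c (psi m))); auto; try tauto.
    - intros m. pose proof (HJ (psi m)). split; lia.
    - apply (conv_close _ (fun m => b (psi m)) y' (fun m => dmf c (psi m))); auto.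
      intros m. apply Hb'. }
  apply HzK. apply (class_in i y); auto.
  apply ap_le_trans with y'; auto. apply (class_le i); auto.
Qed.

Lemma parta : exists theta0, 0 < theta0 /\
     forall theta, 0 < theta -> theta < theta0 ->
     exists delta, 0 < delta /\ delta < theta /\
       forall (i i' : nat) (xi : nat -> pt d) (n j : nat),
         lt i v -> lt i' v ->
         ap_pseudoorbit M M0 F delta xi n ->
         dist_set_lt (xi O) (K i) delta ->
         dist_set_lt (xi n) (K i') delta ->
         le 1 j -> le j n -> dist_set_gt (xi j) (K i) theta ->
         i <> i' /\ class_ap_le M M0 F (K i) (K i').
Proof.
  destruct sep_all as [th0 [Hth0 Hsep]].
  exists th0. split; auto. intros th Hth Hthl.
  set (Q := fun i i' r => forall (xi : nat -> pt d) (n j : nat),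
         ap_pseudoorbit M M0 F r xi n ->
         dist_set_lt (xi O) (K i) r -> dist_set_lt (xi n) (K i') r ->
         le 1 j -> le j n -> dist_set_gt (xi j) (K i) th ->
         i <> i' /\ class_ap_le M M0 F (K i) (K i')).
  assert (Qmono : forall i i' r r', 0 < r' <= r -> Q i i' r -> Q i i' r').
  { intros i i' r r' Hr HQ xi n j H1 H2 H3 H4 H5 H6. apply (HQ xi n j); auto.
    apply (pseudo_mono r r'); [lra|auto]. apply (dist_lt_mono _ _ r r'); [lra|auto].
    apply (dist_lt_mono _ _ r r'); [lra|auto]. }
  assert (Qex : forall i i', lt i v -> lt i' v -> exists r, 0 < r /\ Q i i' r).
  { intros i i' Hi Hi'. destruct (Nat.eq_dec i i') as [E|E].
    - subst i'. apply NNPP. intros Hn. apply (exc i th0 th Hi Hsep Hth Hthl).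
      intros m. apply NNPP. intros Hm. apply Hn. exists (dmf (th/2) m). split. apply dmf_pos; lra.
      intros xi n j H1 H2 H3 H4 H5 H6. exfalso. apply Hm. exists xi, n, j. auto 10.
    - destruct (classic (class_ap_le M M0 F (K i) (K i'))) as [Hc|Hc].
      + exists 1. split. lra. intros xi n j _ _ _ _ _ _. auto.
      + apply NNPP. intros Hn. apply Hc. apply (lim_class i i' th0 (th/2)); auto; try lra.
        intros m. apply NNPP. intros Hm. apply Hn. exists (dmf (th/2) m). split. apply dmf_pos; lra.
        intros xi n j H1 H2 H3 H4 H5 H6. exfalso. apply Hm. exists xi, n. auto. }
  destruct (fin_min (fun i r => forall i', lt i' v -> Q i i' r) v) as [r [Hr HQ]].
  { intros i r r' Hrr H i' Hi'. apply (Qmono i i' r r'); auto. }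
  { intros i Hi. apply (fin_min (fun i' r => Q i i' r) v).
    intros i' r r' Hrr H. apply (Qmono i i' r r'); auto.
    intros i' Hi'. apply Qex; auto. }
  exists (Rmin r (th/2)). split. apply Rmin_pos; lra. split. eapply Rle_lt_trans. apply Rmin_r. lra.
  intros i i' xi n j Hi Hi'. apply (Qmono i i' r (Rmin r (th/2))). split. apply Rmin_pos; lra. apply Rmin_l.
  apply HQ; auto.
Qed.

End Dyn.


Theorem mainTheorem6 (d : nat) (M M0 M1 : pt d -> Prop) (F : pt d -> pt d)
  (HMclosed : closed_in_Rd M)
  (HFmaps : forall x, M x -> M (F x))
  (HFcont : cont_on_set M F)
  (HFbdd : exists B, forall x, M x -> edist (F x) zero_pt <= B)
  (HMsplit : forall x, M x <-> (M0 x \/ M1 x))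
  (HMdisj : forall x, ~ (M0 x /\ M1 x))
  (HM0closed : closed_in_Rd M0)
  (HF0 : forall x, M0 x -> M0 (F x))
  (HF1 : forall x, M1 x -> M1 (F x))
  (v : nat) (K : nat -> pt d -> Prop)
  (HKbasic : forall i, lt i v -> ap_basic_class M M0 F (K i))
  (HKin1 : forall i, lt i v -> forall x, K i x -> M1 x)
  (HKdistinct : forall i j, lt i v -> lt j v -> i <> j -> ~ (forall x, K i x <-> K j x))
  (HKall : forall C, ap_basic_class M M0 F C -> (forall x, C x -> M1 x) ->
             exists i, lt i v /\ forall x, C x <-> K i x)
  (HKclosed : forall i, lt i v -> closed_in_Rd (K i)) :
  (exists theta0, 0 < theta0 /\
     forall theta, 0 < theta -> theta < theta0 ->
     exists delta, 0 < delta /\ delta < theta /\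
       forall (i i' : nat) (xi : nat -> pt d) (n j : nat),
         lt i v -> lt i' v ->
         ap_pseudoorbit M M0 F delta xi n ->
         dist_set_lt (xi O) (K i) delta ->
         dist_set_lt (xi n) (K i') delta ->
         le 1 j -> le j n -> dist_set_gt (xi j) (K i) theta ->
         i <> i' /\ class_ap_le M M0 F (K i) (K i'))
  /\
  (forall delta', 0 < delta' ->
     exists delta n0, 0 < delta /\ delta < delta' /\ le 1 n0 /\
       forall (xi : nat -> pt d) (n : nat),
         ap_pseudoorbit M M0 F delta xi n -> lt n0 n ->
         exists j, le j n /\ ap_nbhd M delta' (R_ap M M0 F) (xi j)).
Proof.
  assert (HM0M : forall x, M0 x -> M x) by (intros x Hx; apply HMsplit; auto).
  assert (HF1' : forall x, M x -> ~ M0 x -> ~ M0 (F x)).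
  { intros x Hx Hx0 HF. apply HMsplit in Hx. destruct Hx as [H|H]. tauto.
    apply (HMdisj (F x)). split; auto. }
  destruct HFbdd as [B HB].
  assert (HB' : forall x, M x -> sdist (F x) zero_pt <= B).
  { intros x Hx. eapply Rle_trans. apply sdist_le_edist. auto. }
  assert (HKM : forall i, lt i v -> forall x, K i x -> M x /\ ~ M0 x).
  { intros i Hi x Hx. pose proof (HKin1 i Hi x Hx). split. apply HMsplit; auto.
    intros H0. apply (HMdisj x); auto. }
  split.
  - exact (parta d M M0 F HMclosed HFmaps HFcont HM0closed HF1' B HB' v K HKbasic HKM HKclosed).
  - exact (partb d M M0 F HMclosed HFmaps HFcont HM0closed HF0 B HB').
Qed.
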